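(* Let $A,B,P,Q,X,Y$ be positive words (in the letters $\sigma_1,\dots,\sigma_{n-1},x_1,\dots,x_{n-1}$, the words $A,B$ possibly empty) with $A\doteq P$, $B\doteq Q$ and $AXB\doteq PYQ$. Then $X\doteq Y$. That is, the monoid $SB_n^+$ is left and right cancellative.
   Context: Fix $n\ge 2$. The positive singular braid monoid $SB_n^+$ is the monoid with generators $\sigma_1,\dots,\sigma_{n-1},x_1,\dots,x_{n-1}$ and relations: $\sigma_i\sigma_j=\sigma_j\sigma_i$ and $x_ix_j=x_jx_i$ if $|i-j|>1$; $x_i\sigma_j=\sigma_jx_i$ if $|i-j|\ne 1$; $\sigma_i\sigma_{i+1}\sigma_i=\sigma_{i+1}\sigma_i\sigma_{i+1}$; $\sigma_i\sigma_{i+1}x_i=x_{i+1}\sigma_i\sigma_{i+1}$; $\sigma_{i+1}\sigma_ix_{i+1}=x_i\sigma_{i+1}\sigma_i$. A positive word is a word in the letters $\sigma_i,x_i$. For positive words, $A\doteq B$ means they represent the same element of $SB_n^+$. *)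

(* Defs.v *)
From Stdlib Require Import List Arith Relations.
Import ListNotations.

Inductive letter : Type :=
| sig : nat -> letter
| xl  : nat -> letter.

Definition word := list letter.

Definition letter_index (a : letter) : nat :=
  match a with sig i => i | xl i => i end.

Definition valid_letter (n : nat) (a : letter) : Prop :=
  1 <= letter_index a /\ letter_index a <= n - 1.

Definition positive_word (n : nat) (w : word) : Prop :=
  Forall (valid_letter n) w.

Definition far (i j : nat) : Prop := i + 1 < j \/ j + 1 < i.
Definition not_adj (i j : nat) : Prop := i <> j + 1 /\ j <> i + 1.
Definition vidx (n i : nat) : Prop := 1 <= i /\ i <= n - 1.

Inductive sb_rel (n : nat) : word -> word -> Prop :=
| r_ss : forall i j, vidx n i -> vidx n j -> far i j ->
    sb_rel n [sig i; sig j] [sig j; sig i]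
| r_xx : forall i j, vidx n i -> vidx n j -> far i j ->
    sb_rel n [xl i; xl j] [xl j; xl i]
| r_xs : forall i j, vidx n i -> vidx n j -> not_adj i j ->
    sb_rel n [xl i; sig j] [sig j; xl i]
| r_braid : forall i, vidx n i -> vidx n (i + 1) ->
    sb_rel n [sig i; sig (i + 1); sig i] [sig (i + 1); sig i; sig (i + 1)]
| r_mix1 : forall i, vidx n i -> vidx n (i + 1) ->
    sb_rel n [sig i; sig (i + 1); xl i] [xl (i + 1); sig i; sig (i + 1)]
| r_mix2 : forall i, vidx n i -> vidx n (i + 1) ->
    sb_rel n [sig (i + 1); sig i; xl (i + 1)] [xl i; sig (i + 1); sig i].

Inductive sb_step (n : nat) : word -> word -> Prop :=
| step_ctx : forall u v l r, sb_rel n l r ->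
    sb_step n (u ++ l ++ v) (u ++ r ++ v).

Definition sb_eq (n : nat) : word -> word -> Prop :=
  clos_refl_sym_trans word (sb_step n).

(* Main.v *)
Require Import Defs.
From Stdlib Require Import List Arith Relations Lia Bool.
Import ListNotations.


Section Basics.
Variable n : nat.
Notation E := (sb_eq n).

Lemma E_refl x : E x x. Proof. apply rst_refl. Qed.
Lemma E_sym x y : E x y -> E y x. Proof. apply rst_sym. Qed.
Lemma E_trans x y z : E x y -> E y z -> E x z. Proof. apply rst_trans. Qed.

Lemma E_rel l r : sb_rel n l r -> E l r.
Proof. intro H. apply rst_step.
  pose proof (step_ctx n [] [] l r H) as H'. simpl in H'. rewrite !app_nil_r in H'. exact H'. Qed.

Lemma E_app_l w u v : E u v -> E (w ++ u) (w ++ v).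
Proof. induction 1.
  - destruct H. apply rst_step. pose proof (step_ctx n (w++u) v l r H) as H0.
    rewrite <- !app_assoc in H0. exact H0.
  - apply E_refl.
  - apply E_sym; auto.
  - eapply E_trans; eauto. Qed.

Lemma E_app_r w u v : E u v -> E (u ++ w) (v ++ w).
Proof. induction 1.
  - destruct H. apply rst_step. pose proof (step_ctx n u (v++w) l r H) as H0.
    rewrite <- !app_assoc. exact H0.
  - apply E_refl.
  - apply E_sym; auto.
  - eapply E_trans; eauto. Qed.

Lemma E_app u v u' v' : E u u' -> E v v' -> E (u ++ v) (u' ++ v').
Proof. intros; eapply E_trans. apply E_app_r; eauto. apply E_app_l; auto. Qed.

Lemma rel_len l r : sb_rel n l r -> length l = length r.
Proof. destruct 1; reflexivity. Qed.

Lemma E_len u v : E u v -> length u = length v.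
Proof. induction 1; try congruence. destruct H. rewrite !length_app.
  apply rel_len in H. lia. Qed.

Lemma rel_pos l r : sb_rel n l r -> positive_word n l /\ positive_word n r.
Proof. unfold positive_word, valid_letter, vidx.
  destruct 1; unfold vidx in *; simpl in *; split; repeat (apply Forall_cons; [simpl; lia|]); apply Forall_nil. Qed.

Lemma E_pos u v : E u v -> (positive_word n u <-> positive_word n v).
Proof. induction 1; try tauto. destruct H. apply rel_pos in H.
  unfold positive_word in *. rewrite !Forall_app. tauto. Qed.

End Basics.
Arguments E_app_l {n}. Arguments E_app_r {n}. Arguments E_app {n}.

Definition letter_eqb (a b : letter) : bool :=
  match a, b with
  | sig i, sig j => i =? j
  | xl i, xl j => i =? j
  | _, _ => false
  end.

Lemma letter_eqb_spec a b : reflect (a = b) (letter_eqb a b).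
Proof. destruct a, b; simpl; try (constructor; congruence);
  destruct (Nat.eqb_spec n n0); constructor; congruence. Qed.

Definition comp0 (a b : letter) : option word :=
 match a, b with
 | sig i, sig j => if i =? j then None else
     if (j =? i+1) || (i =? j+1) then Some [sig j; sig i] else Some [sig j]
 | xl i, xl j => if i =? j then None else
     if (j =? i+1) || (i =? j+1) then None else Some [xl j]
 | sig i, xl j => if (j =? i+1) || (i =? j+1) then Some [sig j; xl i] else Some [xl j]
 | xl i, sig j => if (j =? i+1) || (i =? j+1) then Some [sig j; sig i] else Some [sig j]
 end.

Lemma comp0_idx a b p : comp0 a b = Some p ->
  Forall (fun x => letter_index x = letter_index a \/ letter_index x = letter_index b) p.
Proof. destruct a, b; simpl;
  repeat match goal with |- context [if ?c then _ else _] => destruct c end;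
  intro H; inversion H; subst; repeat (apply Forall_cons; [simpl; auto|]); apply Forall_nil. Qed.

Lemma comp0_Forall (P : letter -> Prop) a b p :
  (forall x, letter_index x = letter_index a \/ letter_index x = letter_index b -> P x) ->
  comp0 a b = Some p -> Forall P p.
Proof. intros HP H. apply comp0_idx in H. eapply Forall_impl; [|exact H]. auto. Qed.

Inductive rres := RFail | RFuel | ROk (q' p' : word).

Fixpoint rv (f : nat) (p q : word) {struct f} : rres :=
  match p, q with
  | [], _ => ROk q []
  | _, [] => ROk [] p
  | d :: p1, e :: q1 =>
    match f with
    | 0 => RFuel
    | S f' => if letter_eqb d e then rv f' p1 q1 else
        match comp0 d e, comp0 e d with
        | Some x, Some y =>
          match rv f' p1 x with
          | ROk x' p2 =>
            match rv f' y q1 with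
            | ROk q2 y' =>
              match rv f' p2 q2 with
              | ROk q3 p3 => ROk (x' ++ q3) (y' ++ p3)
              | r => r end
            | r => r end
          | r => r end
        | _, _ => RFail
        end
    end
  end.

Lemma rv_Forall (P : letter -> Prop) :
  (forall a b p, P a -> P b -> comp0 a b = Some p -> Forall P p) ->
  forall f p q q' p', Forall P p -> Forall P q -> rv f p q = ROk q' p' ->
  Forall P q' /\ Forall P p'.
Proof.
  intros HP f. induction f; intros p q q' p' Hp Hq H.
  - destruct p, q; simpl in H; inversion H; subst; auto.
  - destruct p as [|d p1]; [simpl in H; inversion H; subst; auto|].
    destruct q as [|e q1]; [simpl in H; inversion H; subst; auto|].
    apply Forall_cons_iff in Hp as [H2 H3]. apply Forall_cons_iff in Hq as [H5 H6]. simpl in H.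
    destruct (letter_eqb d e); [exact (IHf _ _ _ _ H3 H6 H)|].
    destruct (comp0 d e) as [x|] eqn:Ex; [|cbn in H; congruence].
    destruct (comp0 e d) as [y|] eqn:Ey; [|cbn in H; congruence].
    pose proof (HP _ _ _ H2 H5 Ex) as Hx. pose proof (HP _ _ _ H5 H2 Ey) as Hy.
    destruct (rv f p1 x) as [| |x' p2] eqn:E1; try congruence.
    destruct (IHf _ _ _ _ H3 Hx E1) as [Hx' Hp2].
    destruct (rv f y q1) as [| |q2 y'] eqn:E2; try congruence.
    destruct (IHf _ _ _ _ Hy H6 E2) as [Hq2 Hy'].
    destruct (rv f p2 q2) as [| |q3 p3] eqn:E3; try congruence.
    destruct (IHf _ _ _ _ Hp2 Hq2 E3) as [Hq3 Hp3].
    inversion H; subst. split; apply Forall_app; auto.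
Qed.

Definition pat (x y : nat) : bool * bool * bool := (x =? y, x =? y+1, y =? x+1).

Definition ren (g : nat -> nat) (a : letter) : letter :=
  match a with sig i => sig (g i) | xl i => xl (g i) end.

Lemma ren_idx g a : letter_index (ren g a) = g (letter_index a).
Proof. destruct a; reflexivity. Qed.

Lemma comp0_ren g a b :
  pat (g (letter_index a)) (g (letter_index b)) = pat (letter_index a) (letter_index b) ->
  comp0 (ren g a) (ren g b) = option_map (map (ren g)) (comp0 a b).
Proof. unfold pat; destruct a as [i|i], b as [j|j]; cbn [comp0 ren letter_index]; intro H; inversion H as [[H1 H2 H3]];
  rewrite ?H1, ?H2, ?H3; clear;
  repeat match goal with |- context [if ?c then _ else _] => destruct c end; reflexivity. Qed.

Lemma letter_eqb_ren g a b :
  pat (g (letter_index a)) (g (letter_index b)) = pat (letter_index a) (letter_index b) ->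
  letter_eqb (ren g a) (ren g b) = letter_eqb a b.
Proof. unfold pat; destruct a as [i|i], b as [j|j]; cbn [letter_eqb ren letter_index]; intro H; inversion H; auto. Qed.

Definition rmap (g : nat -> nat) (r : rres) : rres :=
  match r with ROk a b => ROk (map (ren g) a) (map (ren g) b) | x => x end.

Section Ren.
Variable g : nat -> nat.
Variable S : list nat.
Hypothesis Hg : forall x y, In x S -> In y S -> pat (g x) (g y) = pat x y.
Definition inS (a : letter) : Prop := In (letter_index a) S.

Lemma inS_comp a b p : inS a -> inS b -> comp0 a b = Some p -> Forall inS p.
Proof. intros Ha Hb. apply comp0_Forall. unfold inS. intros x [->| ->]; auto. Qed.

Lemma rv_ren f : forall p q, Forall inS p -> Forall inS q ->
  rv f (map (ren g) p) (map (ren g) q) = rmap g (rv f p q).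
Proof.
  induction f; intros p q Hp Hq.
  - destruct p, q; reflexivity.
  - destruct p as [|d p1]; [reflexivity|].
    destruct q as [|e q1]; [reflexivity|].
    apply Forall_cons_iff in Hp as [H1 H2]. apply Forall_cons_iff in Hq as [H4 H5]. simpl.
    rewrite letter_eqb_ren by (apply Hg; auto).
    destruct (letter_eqb d e); [apply IHf; auto|].
    rewrite !comp0_ren by (apply Hg; auto).
    destruct (comp0 d e) as [x|] eqn:Ex; [|reflexivity].
    destruct (comp0 e d) as [y|] eqn:Ey; [|reflexivity]. simpl.
    pose proof (inS_comp _ _ _ H1 H4 Ex) as Hx. pose proof (inS_comp _ _ _ H4 H1 Ey) as Hy.
    rewrite IHf by auto.
    destruct (rv f p1 x) as [| |x' p2] eqn:E1; try reflexivity. simpl.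
    destruct (rv_Forall inS inS_comp _ _ _ _ _ H2 Hx E1) as [Hx' Hp2].
    rewrite IHf by auto.
    destruct (rv f y q1) as [| |q2 y'] eqn:E2; try reflexivity. simpl.
    destruct (rv_Forall inS inS_comp _ _ _ _ _ Hy H5 E2) as [Hq2 Hy'].
    rewrite IHf by auto.
    destruct (rv f p2 q2) as [| |q3 p3] eqn:E3; try reflexivity. simpl.
    rewrite !map_app. reflexivity.
Qed.
End Ren.

Section Main.
Variable n : nat.
Notation E := (sb_eq n).
Notation pos := (positive_word n).
Notation valid := (valid_letter n).

Ltac eqbs := repeat match goal with
  | H : context [?x =? ?y] |- _ => destruct (Nat.eqb_spec x y)
  | |- context [?x =? ?y] => destruct (Nat.eqb_spec x y) end.

Lemma comp0_sound a b p q : valid a -> valid b -> comp0 a b = Some p -> comp0 b a = Some q ->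
  E (a :: p) (b :: q).
Proof.
  destruct a as [i|i], b as [j|j]; unfold valid_letter; cbn [comp0 letter_index];
  intros Ha Hb H1 H2; eqbs; simpl in *; try discriminate;
  inversion H1; inversion H2; subst; try lia;
  first [ apply E_rel; constructor; unfold vidx, far, not_adj; lia
        | apply E_sym, E_rel; constructor; unfold vidx, far, not_adj; lia ].
Qed.

Lemma valid_comp : forall a b p, valid a -> valid b -> comp0 a b = Some p -> Forall valid p.
Proof. intros a b p Ha Hb. apply comp0_Forall. unfold valid_letter in *.
  intros x [-> | ->]; auto. Qed.

Lemma head_rel l r : sb_rel n l r -> exists a b p q, l = a :: p /\ r = b :: q /\ a <> b /\
  comp0 a b = Some p /\ comp0 b a = Some q.
Proof.
  destruct 1; unfold vidx, far, not_adj in *; do 4 eexists; (split; [reflexivity|]);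
  (split; [reflexivity|]); (split; [intro Hc; inversion Hc; lia|]); cbn [comp0]; eqbs; simpl; try lia;
  split; reflexivity.
Qed.

Lemma rv_sound f : forall p q q' p', pos p -> pos q -> rv f p q = ROk q' p' ->
  E (p ++ q') (q ++ p').
Proof.
  induction f; intros p q q' p' Hp Hq H.
  - destruct p, q; simpl in H; inversion H; subst; rewrite ?app_nil_r; apply E_refl.
  - destruct p as [|d p1]; [simpl in H; inversion H; subst; rewrite ?app_nil_r; apply E_refl|].
    destruct q as [|e q1]; [simpl in H; inversion H; subst; rewrite ?app_nil_r; apply E_refl|].
    unfold positive_word in *.
    apply Forall_cons_iff in Hp as [Hd Hp1]. apply Forall_cons_iff in Hq as [He Hq1]. simpl in H.
    destruct (letter_eqb_spec d e) as [<-|Hde].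
    { simpl. apply (E_app_l [d]). eapply IHf; eauto. }
    destruct (comp0 d e) as [x|] eqn:Ex; [|cbn in H; congruence].
    destruct (comp0 e d) as [y|] eqn:Ey; [|cbn in H; congruence].
    pose proof (valid_comp _ _ _ Hd He Ex) as Hx. pose proof (valid_comp _ _ _ He Hd Ey) as Hy.
    destruct (rv f p1 x) as [| |x' p2] eqn:E1; try congruence.
    destruct (rv_Forall _ valid_comp _ _ _ _ _ Hp1 Hx E1) as [Hx' Hp2].
    destruct (rv f y q1) as [| |q2 y'] eqn:E2; try congruence.
    destruct (rv_Forall _ valid_comp _ _ _ _ _ Hy Hq1 E2) as [Hq2 Hy'].
    destruct (rv f p2 q2) as [| |q3 p3] eqn:E3; try congruence.
    inversion H; subst.
    pose proof (IHf _ _ _ _ Hp1 Hx E1) as S1.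
    pose proof (IHf _ _ _ _ Hy Hq1 E2) as S2.
    pose proof (IHf _ _ _ _ Hp2 Hq2 E3) as S3.
    pose proof (comp0_sound _ _ _ _ Hd He Ex Ey) as S0.
    pose proof (E_app_l [d] _ _ (E_app_r q3 _ _ S1)) as T1.
    pose proof (E_app_l (d :: x) _ _ S3) as T2.
    pose proof (E_app_r (q2 ++ p3) _ _ S0) as T3.
    pose proof (E_app_l [e] _ _ (E_app_r p3 _ _ S2)) as T4.
    simpl in *. rewrite <- !app_assoc in *.
    eapply E_trans; [exact T1|]. eapply E_trans; [exact T2|].
    eapply E_trans; [exact T3|]. exact T4.
Qed.

Definition Mk (L : nat) := forall a b u v, length u = L -> pos (a :: u) -> E (a :: u) (b :: v) ->
  (a = b -> E u v) /\
  (a <> b -> exists p q w, comp0 a b = Some p /\ comp0 b a = Some q /\ E u (p ++ w) /\ E v (q ++ w)).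

Definition rspec (r : rres) (t1 t2 : word) : Prop :=
  match r with
  | RFail => False
  | RFuel => True
  | ROk q' p' => exists s, E t1 (q' ++ s) /\ E t2 (p' ++ s)
  end.

Section Complete.
Variable L : nat.
Hypothesis IH : forall k, k < L -> Mk k.

Lemma rv_complete f : forall p q t1 t2, length (p ++ t1) <= L -> pos (p ++ t1) ->
  E (p ++ t1) (q ++ t2) -> rspec (rv f p q) t1 t2.
Proof.
  induction f; intros p q t1 t2 Hl Hp HE.
  - destruct p, q; simpl in *; try exact I.
    + exists t2; split; [exact HE|apply E_refl].
    + exists t2; split; [exact HE|apply E_refl].
    + exists t1; split; [apply E_refl|apply E_sym; exact HE].
  - destruct p as [|d p1].
    { exists t2; split; [exact HE|apply E_refl]. }
    destruct q as [|e q1].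
    { exists t1; split; [apply E_refl|apply E_sym; exact HE]. }
    simpl in HE, Hl, Hp |- *.
    assert (Hk : length (p1 ++ t1) < L) by lia.
    destruct (IH _ Hk d e (p1 ++ t1) (q1 ++ t2) eq_refl Hp HE) as [Heq Hne].
    unfold positive_word in Hp. apply Forall_cons_iff in Hp as [Hd Hp1].
    destruct (letter_eqb_spec d e) as [<-|Hde].
    { apply IHf; auto. lia. }
    destruct (Hne Hde) as (x & y & r & Ex & Ey & H1 & H2).
    rewrite Ex, Ey.
    assert (Hxr : pos (x ++ r)) by (apply (E_pos n _ _ H1); exact Hp1).
    assert (Hpq : pos (q1 ++ t2)).
    { assert (pos (e :: q1 ++ t2)) by (apply (E_pos n _ _ HE); constructor; auto).
      inversion H; auto. }
    assert (Hyr : pos (y ++ r)) by (apply (E_pos n _ _ H2); exact Hpq).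
    pose proof (E_len _ _ _ H1) as L1. pose proof (E_len _ _ _ H2) as L2.
    pose proof (E_len _ _ _ HE) as L0. simpl in L0.
    rewrite ?length_app in *.
    pose proof (IHf p1 x t1 r ltac:(rewrite ?length_app; lia) ltac:(exact Hp1) H1) as R1.
    destruct (rv f p1 x) as [| |x' p2]; try exact R1.
    destruct R1 as (s1 & Ht1 & Hr1).
    pose proof (IHf y q1 r t2 ltac:(rewrite length_app; lia) Hyr (E_sym _ _ _ H2)) as R2.
    destruct (rv f y q1) as [| |q2 y']; try exact R2.
    destruct R2 as (s2 & Hr2 & Ht2).
    assert (Hr : pos r) by (unfold positive_word in Hxr; rewrite Forall_app in Hxr; tauto).
    assert (Hp2 : pos (p2 ++ s1)) by (apply (E_pos n _ _ Hr1); exact Hr).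
    pose proof (E_len _ _ _ Hr1) as L3.
    pose proof (IHf p2 q2 s1 s2 ltac:(rewrite <- L3; rewrite ?length_app in *; lia) Hp2 (E_trans _ _ _ _ (E_sym _ _ _ Hr1) Hr2)) as R3.
    destruct (rv f p2 q2) as [| |q3 p3]; try exact R3.
    destruct R3 as (s & Hs1 & Hs2).
    exists s. rewrite <- !app_assoc. split.
    + eapply E_trans; [exact Ht1|]. apply E_app_l. exact Hs1.
    + eapply E_trans; [exact Ht2|]. apply E_app_l. exact Hs2.
Qed.

Lemma cancel_prefix : forall p t1 t2, length (p ++ t1) <= L -> pos (p ++ t1) ->
  E (p ++ t1) (p ++ t2) -> E t1 t2.
Proof.
  induction p as [|d p IHp]; intros t1 t2 Hl Hp HE; simpl in *; auto.
  assert (Hk : length (p ++ t1) < L) by lia.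
  destruct (IH _ Hk d d (p ++ t1) (p ++ t2) eq_refl Hp HE) as [Heq _].
  unfold positive_word in Hp; inversion Hp; subst.
  apply IHp; auto. lia.
Qed.
End Complete.
End Main.

Definition F := 6.
#[local] Arguments rv f p q : simpl never.

Definition cube_b (a b c : letter) : bool :=
 if letter_eqb a b || letter_eqb a c || letter_eqb b c then true else
 match comp0 c a, comp0 c b, comp0 a c, comp0 b c with
 | Some pca, Some pcb, Some pac, Some pbc =>
   match rv F pca pcb with
   | RFail => true
   | RFuel => false
   | ROk q' p' =>
     match comp0 a b, comp0 b a with
     | Some p, Some q =>
       match rv F p (pac ++ q') with
       | ROk k [] => match rv F (pbc ++ p') (q ++ k) with ROk [] [] => true | _ => false end
       | _ => false end
     | _, _ => false end
   end
 | _, _, _, _ => true end.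

Definition cube_P a b c := a <> b -> a <> c -> b <> c ->
  forall pca pcb pac pbc, comp0 c a = Some pca -> comp0 c b = Some pcb ->
  comp0 a c = Some pac -> comp0 b c = Some pbc ->
  rv F pca pcb = RFail \/ exists q' p' p q k, rv F pca pcb = ROk q' p' /\
    comp0 a b = Some p /\ comp0 b a = Some q /\ rv F p (pac ++ q') = ROk k [] /\
    rv F (pbc ++ p') (q ++ k) = ROk [] [].

Lemma cube_b_P a b c : cube_b a b c = true -> cube_P a b c.
Proof.
  unfold cube_b, cube_P. intros H Hab Hac Hbc pca pcb pac pbc E1 E2 E3 E4.
  destruct (letter_eqb_spec a b); [congruence|].
  destruct (letter_eqb_spec a c); [congruence|].
  destruct (letter_eqb_spec b c); [congruence|]. simpl in H.
  rewrite E1, E2, E3, E4 in H.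
  destruct (rv F pca pcb) as [| |q' p'] eqn:R; auto; try (cbn in H; congruence).
  right. destruct (comp0 a b) as [p|]; [|cbn in H; congruence].
  destruct (comp0 b a) as [q|]; [|cbn in H; congruence].
  destruct (rv F p (pac ++ q')) as [| |k l] eqn:R2; try (cbn in H; congruence).
  destruct l; [|cbn in H; congruence].
  destruct (rv F (pbc ++ p') (q ++ k)) as [| |l1 l2] eqn:R3; try (cbn in H; congruence).
  destruct l1; [|cbn in H; congruence]. destruct l2; [|cbn in H; congruence].
  exists q', p', p, q, k. auto.
Qed.

Definition canon_letters : list letter :=
  map sig (seq 0 5) ++ map xl (seq 0 5).

Lemma all_cube_canon : forallb (fun a => forallb (fun b => forallb (fun c => cube_b a b c)
  canon_letters) canon_letters) canon_letters = true.
Proof. vm_compute. reflexivity. Qed.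

Lemma canon_in a : letter_index a <= 4 -> In a canon_letters.
Proof. intro H. unfold canon_letters. apply in_or_app.
  destruct a as [i|i]; simpl in H; [left|right]; apply in_map; apply in_seq; lia. Qed.

Lemma cube_canon a b c : letter_index a <= 4 -> letter_index b <= 4 -> letter_index c <= 4 ->
  cube_b a b c = true.
Proof.
  intros Ha Hb Hc. pose proof all_cube_canon as H.
  rewrite forallb_forall in H. specialize (H a (canon_in a Ha)).
  rewrite forallb_forall in H. specialize (H b (canon_in b Hb)).
  rewrite forallb_forall in H. exact (H c (canon_in c Hc)).
Qed.

Lemma cube_ren g a b c :
  (forall x y, In x [letter_index a; letter_index b; letter_index c] ->
               In y [letter_index a; letter_index b; letter_index c] -> pat (g x) (g y) = pat x y) ->
  cube_b (ren g a) (ren g b) (ren g c) = cube_b a b c.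
Proof.
  intro Hg. set (S := [letter_index a; letter_index b; letter_index c]) in *.
  assert (Ia : inS S a) by (unfold inS, S; simpl; auto).
  assert (Ib : inS S b) by (unfold inS, S; simpl; auto).
  assert (Ic : inS S c) by (unfold inS, S; simpl; auto).
  assert (HI : forall x y, inS S x -> inS S y ->
     pat (g (letter_index x)) (g (letter_index y)) = pat (letter_index x) (letter_index y))
    by (intros; apply Hg; auto).
  unfold cube_b.
  rewrite !letter_eqb_ren by (apply HI; auto).
  destruct (letter_eqb a b || letter_eqb a c || letter_eqb b c); [reflexivity|].
  rewrite !comp0_ren by (apply HI; auto).
  destruct (comp0 c a) as [pca|] eqn:E1; [|reflexivity].
  destruct (comp0 c b) as [pcb|] eqn:E2; [|destruct (comp0 a c), (comp0 b c); reflexivity].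
  destruct (comp0 a c) as [pac|] eqn:E3; [|destruct (comp0 b c); reflexivity].
  destruct (comp0 b c) as [pbc|] eqn:E4; [|reflexivity].
  cbn [option_map].
  pose proof (inS_comp S _ _ _ Ic Ia E1) as F1.
  pose proof (inS_comp S _ _ _ Ic Ib E2) as F2.
  pose proof (inS_comp S _ _ _ Ia Ic E3) as F3.
  pose proof (inS_comp S _ _ _ Ib Ic E4) as F4.
  rewrite (rv_ren g S Hg) by auto.
  destruct (rv F pca pcb) as [| |q' p'] eqn:R1; try reflexivity. cbn [rmap].
  destruct (rv_Forall (inS S) (inS_comp S) _ _ _ _ _ F1 F2 R1) as [Fq' Fp'].
  destruct (comp0 a b) as [p|] eqn:E5; [|destruct (comp0 b a); reflexivity].
  destruct (comp0 b a) as [q|] eqn:E6; [|reflexivity].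
  cbn [option_map].
  pose proof (inS_comp S _ _ _ Ia Ib E5) as F5.
  pose proof (inS_comp S _ _ _ Ib Ia E6) as F6.
  rewrite <- map_app, (rv_ren g S Hg) by (auto; apply Forall_app; auto).
  destruct (rv F p (pac ++ q')) as [| |k l] eqn:R2; try reflexivity. cbn [rmap].
  destruct l; [|reflexivity]. cbn [map].
  destruct (rv_Forall (inS S) (inS_comp S) _ _ _ _ _ F5 (proj2 (Forall_app _ _ _) (conj F3 Fq')) R2) as [Fk _].
  rewrite <- !map_app, (rv_ren g S Hg) by (apply Forall_app; auto).
  destruct (rv F (pbc ++ p') (q ++ k)) as [| |l1 l2]; try reflexivity. cbn [rmap].
  destruct l1, l2; reflexivity.
Qed.

Definition beq3 (x y : bool * bool * bool) : bool :=
  let '(a, b, c) := x in let '(d, e, f) := y in Bool.eqb a d && Bool.eqb b e && Bool.eqb c f.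

Lemma beq3_eq x y : beq3 x y = true -> x = y.
Proof. destruct x as [[a b] c], y as [[d e] f]; simpl.
  intro H. repeat rewrite andb_true_iff in H. destruct H as [[H1 H2] H3].
  apply Bool.eqb_prop in H1, H2, H3. subst. reflexivity. Qed.

Definition canon_ok (i0 j0 k0 : nat) (c1 c2 c3 : bool * bool * bool) : bool :=
  (i0 <=? 4) && (j0 <=? 4) && (k0 <=? 4) &&
  beq3 (pat i0 j0) c1 && beq3 (pat j0 k0) c2 && beq3 (pat i0 k0) c3.

Ltac pick := (exists 0 + exists 1 + exists 2 + exists 3 + exists 4).

Lemma canon_exists i j k : exists i0 j0 k0, canon_ok i0 j0 k0 (pat i j) (pat j k) (pat i k) = true.
Proof.
  assert (Hp : forall x y, pat x y = (x =? y, x =? y + 1, y =? x + 1)) by reflexivity.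
  rewrite (Hp i j), (Hp j k), (Hp i k).
  repeat match goal with |- context [?x =? ?y] => destruct (Nat.eqb_spec x y) end;
  try (exfalso; lia);
  solve [pick; pick; pick; reflexivity].
Qed.

Lemma pat_diag x : pat x x = (true, false, false).
Proof. unfold pat. rewrite Nat.eqb_refl.
  destruct (Nat.eqb_spec x (x+1)); [lia|]. reflexivity. Qed.

Definition sw (t : bool * bool * bool) := let '(a, b, c) := t in (a, c, b).
Lemma pat_sym x y : pat y x = sw (pat x y).
Proof. unfold pat, sw. rewrite (Nat.eqb_sym y x). reflexivity. Qed.

Lemma pat_eq1 x y x' y' : pat x y = pat x' y' -> x = y -> x' = y'.
Proof. unfold pat. intros H ->. inversion H as [[H1 H2 H3]].
  rewrite Nat.eqb_refl in H1. symmetry in H1. apply Nat.eqb_eq in H1. exact H1. Qed.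

Definition setidx (a : letter) (m : nat) : letter :=
  match a with sig _ => sig m | xl _ => xl m end.

Lemma canon_triple a b c : exists g a0 b0 c0,
  a = ren g a0 /\ b = ren g b0 /\ c = ren g c0 /\
  letter_index a0 <= 4 /\ letter_index b0 <= 4 /\ letter_index c0 <= 4 /\
  (forall x y, In x [letter_index a0; letter_index b0; letter_index c0] ->
               In y [letter_index a0; letter_index b0; letter_index c0] -> pat (g x) (g y) = pat x y).
Proof.
  set (i := letter_index a). set (j := letter_index b). set (k := letter_index c).
  destruct (canon_exists i j k) as (i0 & j0 & k0 & H).
  unfold canon_ok in H. repeat rewrite andb_true_iff in H.
  destruct H as [[[[[B1 B2] B3] P1] P2] P3].
  apply Nat.leb_le in B1, B2, B3. apply beq3_eq in P1, P2, P3.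
  set (g := fun m => if m =? i0 then i else if m =? j0 then j else k).
  assert (G1 : g i0 = i) by (unfold g; rewrite Nat.eqb_refl; reflexivity).
  assert (G2 : g j0 = j).
  { unfold g. destruct (Nat.eqb_spec j0 i0) as [E|E].
    - apply (pat_eq1 i0 j0); [exact P1|congruence].
    - rewrite Nat.eqb_refl. reflexivity. }
  assert (G3 : g k0 = k).
  { unfold g. destruct (Nat.eqb_spec k0 i0) as [E|E].
    - apply (pat_eq1 i0 k0); [exact P3|congruence].
    - destruct (Nat.eqb_spec k0 j0) as [E'|E'].
      + apply (pat_eq1 j0 k0); [exact P2|congruence].
      + reflexivity. }
  exists g, (setidx a i0), (setidx b j0), (setidx c k0).
  assert (Ha : a = ren g (setidx a i0)) by (destruct a; simpl; rewrite G1; reflexivity).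
  assert (Hb : b = ren g (setidx b j0)) by (destruct b; simpl; rewrite G2; reflexivity).
  assert (Hc : c = ren g (setidx c k0)) by (destruct c; simpl; rewrite G3; reflexivity).
  assert (Ia : letter_index (setidx a i0) = i0) by (destruct a; reflexivity).
  assert (Ib : letter_index (setidx b j0) = j0) by (destruct b; reflexivity).
  assert (Ic : letter_index (setidx c k0) = k0) by (destruct c; reflexivity).
  rewrite Ia, Ib, Ic.
  split; [exact Ha|]. split; [exact Hb|]. split; [exact Hc|].
  split; [lia|]. split; [lia|]. split; [lia|].
  intros x y Hx Hy. simpl in Hx, Hy.
  destruct Hx as [<-|[<-|[<-|[]]]]; destruct Hy as [<-|[<-|[<-|[]]]];
  rewrite ?G1, ?G2, ?G3, ?pat_diag;
  first [ reflexivity | symmetry; assumption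
        | rewrite (pat_sym i j), (pat_sym i0 j0), P1; reflexivity
        | rewrite (pat_sym j k), (pat_sym j0 k0), P2; reflexivity
        | rewrite (pat_sym i k), (pat_sym i0 k0), P3; reflexivity ].
Qed.

Lemma cube_all a b c : cube_P a b c.
Proof.
  destruct (canon_triple a b c) as (g & a0 & b0 & c0 & -> & -> & -> & Ha & Hb & Hc & Hg).
  apply cube_b_P. rewrite cube_ren by exact Hg. apply cube_canon; auto.
Qed.

Section Final.
Variable n : nat.
Notation E := (sb_eq n).
Notation pos := (positive_word n).

Definition Good (L : nat) (x y : word) : Prop :=
  match x, y with
  | a :: u, b :: v => length u = L -> (a = b -> E u v) /\
     (a <> b -> exists p q w, comp0 a b = Some p /\ comp0 b a = Some q /\ E u (p ++ w) /\ E v (q ++ w))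
  | _, _ => True
  end.

Lemma pos_cons a u : pos (a :: u) -> valid_letter n a /\ pos u.
Proof. unfold positive_word. intro H. inversion H; auto. Qed.

Lemma good_all L (IH : forall k, k < L -> Mk n k) :
  forall x y, E x y -> pos x -> Good L x y.
Proof.
  intros x y H. induction H as [x y H | x | x y H IHH | x y z H1 IH1 H2 IH2]; intro Hx.
  - destruct H as [u0 v0 l r Hr]. destruct u0 as [|d u1].
    + destruct (head_rel n l r Hr) as (a & b & p & q & -> & -> & Hab & Ep & Eq).
      simpl. intros _. split; [contradiction|]. intros _.
      exists p, q, v0. repeat split; auto; apply E_refl.
    + simpl. intros _. split; [|congruence]. intros _.
      apply rst_step. constructor. exact Hr.
  - destruct x; simpl; auto. intros _; split; [intros; apply E_refl|congruence].
  - assert (Hy : pos x) by (apply (E_pos n _ _ H); exact Hx).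
    specialize (IHH Hy). pose proof (E_len _ _ _ H) as HL.
    destruct x as [|a u]; destruct y as [|b v]; simpl in *; auto.
    intros Hu. destruct (IHH ltac:(lia)) as [G1 G2]. split.
    + intro; apply E_sym; auto.
    + intro Hab. destruct (G2 (fun e => Hab (eq_sym e))) as (p & q & w & ? & ? & ? & ?).
      exists q, p, w; auto.
  - assert (Hy : pos y) by (apply (E_pos n _ _ H1); exact Hx).
    assert (Hz : pos z) by (apply (E_pos n _ _ H2); exact Hy).
    specialize (IH1 Hx). specialize (IH2 Hy).
    pose proof (E_len _ _ _ H1) as L1. pose proof (E_len _ _ _ H2) as L2.
    destruct x as [|a u]; [simpl; auto|]. destruct z as [|b v]; [simpl; auto|].
    destruct y as [|c w]; [simpl in L1; discriminate|].
    simpl in IH1, IH2, L1, L2 |- *. intro Hu.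
    assert (Hw : length w = L) by lia.
    destruct (IH1 Hu) as [G1 G1']. destruct (IH2 Hw) as [G2 G2'].
    destruct (pos_cons _ _ Hx) as [Va Pu]. destruct (pos_cons _ _ Hy) as [Vc Pw].
    destruct (pos_cons _ _ Hz) as [Vb Pv].
    destruct (letter_eqb_spec a c) as [<-|Hac].
    + destruct (letter_eqb_spec a b) as [<-|Hab].
      * split; [intros _; eapply E_trans; eauto|congruence].
      * split; [congruence|]. intros _.
        destruct (G2' Hab) as (p & q & t & ? & ? & ? & ?).
        exists p, q, t. repeat split; auto. eapply E_trans; eauto.
    + destruct (G1' Hac) as (pac & pca & t1 & Eac & Eca & Hu1 & Hw1).
      destruct (letter_eqb_spec c b) as [<-|Hcb].
      * split; [congruence|]. intros _.
        exists pac, pca, t1. repeat split; auto. eapply E_trans; [apply E_sym; eauto|]. auto.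
      * destruct (G2' Hcb) as (pcb & pbc & t2 & Ecb & Ebc & Hw2 & Hv2).
        assert (HE : E (pca ++ t1) (pcb ++ t2)) by (eapply E_trans; [apply E_sym; exact Hw1|exact Hw2]).
        assert (Hpl : length (pca ++ t1) <= L) by (rewrite <- (E_len _ _ _ Hw1); lia).
        assert (Hpp : pos (pca ++ t1)) by (apply (E_pos n _ _ Hw1); exact Pw).
        destruct (letter_eqb_spec a b) as [<-|Hab].
        -- rewrite Eca in Ecb. injection Ecb as <-. rewrite Eac in Ebc. injection Ebc as <-.
           pose proof (cancel_prefix n L IH pca t1 t2 Hpl Hpp HE) as Ht.
           split; [|congruence]. intros _.
           eapply E_trans; [exact Hu1|]. eapply E_trans; [apply E_app_l; exact Ht|].
           apply E_sym; exact Hv2.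
        -- split; [congruence|]. intros _.
           pose proof (rv_complete n L IH F pca pcb t1 t2 Hpl Hpp HE) as RC.
           destruct (cube_all a b c Hab Hac (fun e => Hcb (eq_sym e)) pca pcb pac pbc Eca Ecb Eac Ebc)
             as [RF | (q' & p' & p & q & k & R1 & Ep & Eq & R2 & R3)].
           { rewrite RF in RC. destruct RC. }
           rewrite R1 in RC. destruct RC as (s & Hs1 & Hs2).
           assert (Vpca : pos pca) by exact (valid_comp n c a pca Vc Va Eca).
           assert (Vpcb : pos pcb) by exact (valid_comp n c b pcb Vc Vb Ecb).
           assert (Vpac : pos pac) by exact (valid_comp n a c pac Va Vc Eac).
           assert (Vpbc : pos pbc) by exact (valid_comp n b c pbc Vb Vc Ebc).
           assert (Vp : pos p) by exact (valid_comp n a b p Va Vb Ep).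
           assert (Vq : pos q) by exact (valid_comp n b a q Vb Va Eq).
           destruct (rv_Forall _ (valid_comp n) _ _ _ _ _ Vpca Vpcb R1) as [Vq' Vp'].
           assert (Vpq : pos (pac ++ q')) by (apply Forall_app; auto).
           destruct (rv_Forall _ (valid_comp n) _ _ _ _ _ Vp Vpq R2) as [Vk _].
           pose proof (rv_sound n F _ _ _ _ Vp Vpq R2) as S2.
           assert (Vpp : pos (pbc ++ p')) by (apply Forall_app; auto).
           assert (Vqk : pos (q ++ k)) by (apply Forall_app; auto).
           pose proof (rv_sound n F _ _ _ _ Vpp Vqk R3) as S3.
           rewrite !app_nil_r in S2. rewrite !app_nil_r in S3.
           exists p, q, (k ++ s). repeat split; auto.
           ++ eapply E_trans; [exact Hu1|]. eapply E_trans; [apply E_app_l; exact Hs1|].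
              rewrite app_assoc, app_assoc. apply E_app_r. apply E_sym; exact S2.
           ++ eapply E_trans; [exact Hv2|]. eapply E_trans; [apply E_app_l; exact Hs2|].
              rewrite app_assoc, app_assoc. apply E_app_r. exact S3.
Qed.

Lemma M_all : forall L, Mk n L.
Proof.
  intro L. induction L as [L IH] using lt_wf_ind.
  intros a b u v Hu Hp HE. pose proof (good_all L IH _ _ HE Hp) as G. simpl in G. exact (G Hu).
Qed.

Lemma cancel_left : forall A u v, pos (A ++ u) -> E (A ++ u) (A ++ v) -> E u v.
Proof.
  induction A as [|a A IHA]; intros u v Hp HE; simpl in *; auto.
  destruct (M_all (length (A ++ u)) a a (A ++ u) (A ++ v) eq_refl Hp HE) as [H _].
  apply IHA; [apply (pos_cons _ _ Hp)|]. auto.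
Qed.

Lemma rel_rev l r : sb_rel n l r -> sb_rel n (rev l) (rev r) \/ sb_rel n (rev r) (rev l).
Proof.
  destruct 1; simpl.
  - left. apply r_ss; unfold far in *; auto; lia.
  - left. apply r_xx; unfold far in *; auto; lia.
  - right. apply r_xs; auto.
  - left. apply r_braid; auto.
  - right. apply r_mix2; auto.
  - right. apply r_mix1; auto.
Qed.

Lemma E_rev u v : E u v -> E (rev u) (rev v).
Proof.
  induction 1.
  - destruct H as [u0 v0 l r Hr]. rewrite !rev_app_distr.
    destruct (rel_rev l r Hr) as [H|H].
    + apply rst_step. rewrite <- !app_assoc. constructor. exact H.
    + apply rst_sym, rst_step. rewrite <- !app_assoc. constructor. exact H.
  - apply E_refl.
  - apply E_sym; auto.
  - eapply E_trans; eauto.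
Qed.

Lemma pos_rev w : pos w -> pos (rev w).
Proof. unfold positive_word. intro H. apply Forall_rev. exact H. Qed.

End Final.

Theorem corollary2p1 (n : nat) (Hn : 2 <= n) (A B P Q X Y : word) :
  positive_word n A -> positive_word n B -> positive_word n P ->
  positive_word n Q -> positive_word n X -> positive_word n Y ->
  sb_eq n A P -> sb_eq n B Q -> sb_eq n (A ++ X ++ B) (P ++ Y ++ Q) ->
  sb_eq n X Y.
Proof.
  intros HA HB HP HQ HX HY EAP EBQ E0.
  assert (E1 : sb_eq n (A ++ X ++ B) (A ++ Y ++ B)).
  { eapply E_trans; [exact E0|]. apply E_app; [apply E_sym; exact EAP|].
    apply E_app; [apply E_refl|apply E_sym; exact EBQ]. }
  assert (Hp1 : positive_word n (A ++ X ++ B)) by (unfold positive_word in *; rewrite !Forall_app; auto).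
  pose proof (cancel_left n A _ _ Hp1 E1) as E2.
  apply (E_rev n) in E2. rewrite !rev_app_distr in E2.
  assert (Hp2 : positive_word n (rev B ++ rev X)) by (unfold positive_word in *; apply Forall_app; split; apply Forall_rev; auto).
  pose proof (cancel_left n (rev B) _ _ Hp2 E2) as E3.
  apply (E_rev n) in E3. rewrite !rev_involutive in E3. exact E3.
Qed.
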